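(* Fix an integer $k\ge3$ and consider the utility function described in the context. Suppose every $k$-star network is pairwise stable, where this ranges over all numbers of nodes $n\ge 2k$ and all allowed distributions of leaves. Then necessarily $$\gamma=0 \quad\text{and}\quad c=b_1-b_3.$$
   Context: A $k$-star network ($k\ge3$) on $n\ge 2k$ nodes consists of $k$ ''center'' nodes that are pairwise adjacent, forming a clique. Every other node is a leaf adjacent to exactly one center and to nothing else. Each center has at least one leaf, and the numbers of leaves of any two centers differ by at most one. Networks are finite simple undirected graphs whose vertices (nodes) are self-interested agents. Parameters: benefits $b_1>b_2>b_3>b_4>\dots>0$, where $b_i$ is the benefit a node obtains from a node at distance $i$; a link cost $c$ per immediate neighbor; and an intermediation fraction $\gamma$ with $0\le\gamma<1$. (Entry fees play no role here, since all nodes are already in the network.) Notation: $N$ is the set of nodes, $d_j$ the degree of $j$, and $l(j,w)$ the graph distance. A node $x$ is essential for a pair $y,z$ (with $x\notin\{y,z\}$) if $x$ lies on every path joining $y$ and $z$. Write $E(y,z)$ for the set of nodes essential for $y,z$ and $e(y,z)=|E(y,z)|$. Only pairs joined by a path contribute to the sums below. Utility of node $j$ in network $g$: $$u_j(g)=d_j(b_1-c)+\sum_{w\in N,\ l(j,w)>1}b_{l(j,w)}-\sum_{w\in N,\ E(j,w)\ne\emptyset}\gamma\, b_{l(j,w)}+\sum_{y,z\in N,\ j\in E(y,z)}\frac{\gamma}{e(y,z)}\,2\,b_{l(y,z)}.$$ Pairwise stability: $g$ is pairwise stable if (a) for every link $(i,j)\in g$, $u_i(g\setminus\{(i,j)\})\le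 u_i(g)$ and $u_j(g\setminus\{(i,j)\})\le u_j(g)$; and (b) for every non-link $(i,j)\notin g$, if $u_i(g\cup\{(i,j)\})>u_i(g)$ then $u_j(g\cup\{(i,j)\})<u_j(g)$. *)

(* Defs.v *)
From HB Require Import structures.
From mathcomp Require Import all_boot all_order all_algebra.
Set Implicit Arguments. Unset Strict Implicit. Unset Printing Implicit Defensive.
Import Order.TTheory GRing.Theory Num.Theory.

Definition simple_graph (n : nat) (g : rel 'I_n) : Prop :=
  (forall x y, g x y = g y x) /\ (forall x, ~~ g x x).

Definition add_link n (g : rel 'I_n) (i j : 'I_n) : rel 'I_n :=
  fun x y => [|| g x y, (x == i) && (y == j) | (x == j) && (y == i)].
Definition del_link n (g : rel 'I_n) (i j : 'I_n) : rel 'I_n :=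
  fun x y => g x y && ~~ (((x == i) && (y == j)) || ((x == j) && (y == i))).

Definition degree n (g : rel 'I_n) (j : 'I_n) : nat := #|[set v | g j v]|.

Definition joined n (g : rel 'I_n) (y z : 'I_n) : bool := connect g y z.

Fixpoint walk_len n (g : rel 'I_n) (m : nat) (x y : 'I_n) : bool :=
  match m with
  | 0 => x == y
  | m'.+1 => [exists v, g x v && walk_len g m' v y]
  end.

(* graph distance: least m with a walk of length m (meaningful for joined pairs;
   such an m is always < n) *)
Definition dist n (g : rel 'I_n) (x y : 'I_n) : nat :=
  find (fun m => walk_len g m x y) (iota 0 n).

(* x is essential for y,z: x not in {y,z} and x lies on every path from y to z,
   i.e. there is no path from y to z avoiding x *)
Definition essential n (g : rel 'I_n) (x y z : 'I_n) : bool :=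
  [&& x != y, x != z & ~~ connect (fun u v => g u v && (v != x)) y z].

Definition Eset n (g : rel 'I_n) (y z : 'I_n) : {set 'I_n} :=
  [set x | essential g x y z].

Local Open Scope ring_scope.

Definition utility (R : realFieldType) (b : nat -> R) (c gam : R)
    n (g : rel 'I_n) (j : 'I_n) : R :=
  (degree g j)%:R * (b 1%N - c)
  + \sum_(w : 'I_n | joined g j w && (1 < dist g j w)%N) b (dist g j w)
  - \sum_(w : 'I_n | joined g j w && (Eset g j w != set0)) gam * b (dist g j w)
  + \sum_(y : 'I_n) \sum_(z : 'I_n | [&& (y < z)%N, joined g y z & j \in Eset g y z])
       gam / (#|Eset g y z|)%:R * 2 * b (dist g y z).

Definition pairwise_stable (R : realFieldType) (b : nat -> R) (c gam : R)
    n (g : rel 'I_n) : Prop :=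
  (forall i j : 'I_n, g i j ->
     utility b c gam (del_link g i j) i <= utility b c gam g i /\
     utility b c gam (del_link g i j) j <= utility b c gam g j) /\
  (forall i j : 'I_n, i != j -> ~~ g i j ->
     utility b c gam g i < utility b c gam (add_link g i j) i ->
     utility b c gam (add_link g i j) j < utility b c gam g j).

Definition leaves n (g : rel 'I_n) (C : {set 'I_n}) (cc : 'I_n) : nat :=
  #|[set l | (l \notin C) && g cc l]|.

Definition k_star (k n : nat) (g : rel 'I_n) : Prop :=
  exists C : {set 'I_n},
    [/\ #|C| = k,
        (forall u v, u \in C -> v \in C -> u != v -> g u v),
        (forall l, l \notin C -> exists2 cc, cc \in C & forall v, g l v = (v == cc)),
        (forall cc, cc \in C -> (0 < leaves g C cc)%N) &
        (forall cc cc', cc \in C -> cc' \in C -> (leaves g C cc <= (leaves g C cc').+1)%N)].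

(* Main.v *)
Require Import Defs.
From HB Require Import structures.
From mathcomp Require Import all_boot all_order all_algebra.
From mathcomp Require Import zify ring lra.
From Stdlib Require Import FunctionalExtensionality.
Set Implicit Arguments. Unset Strict Implicit. Unset Printing Implicit Defensive.
Import Order.TTheory GRing.Theory Num.Theory.

Definition av n (h : rel 'I_n) (x : 'I_n) : rel 'I_n := fun u v => h u v && (v != x).

Lemma inEset n (h : rel 'I_n) x y z :
  (x \in Eset h y z) = [&& x != y, x != z & ~~ connect (av h x) y z].
Proof. by rewrite inE. Qed.

Lemma walk_connect n (h : rel 'I_n) m x y : walk_len h m x y -> connect h x y.
Proof.
elim: m x => [|m IH] x /=; first by move/eqP->.
case/existsP=> v /andP[hxv /IH]; apply: connect_trans; exact: connect1.
Qed.

Lemma walk_mono n (h h' : rel 'I_n) m x y : subrel h h' ->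
  walk_len h m x y -> walk_len h' m x y.
Proof.
move=> sub; elim: m x => [|m IH] x //=.
case/existsP=> v /andP[hxv /IH w]; apply/existsP; exists v; by rewrite w sub.
Qed.

Lemma walk_lb n (h : rel 'I_n) (D : 'I_n -> 'I_n -> nat) :
  (forall y, D y y = 0%N) -> (forall x v y, h x v -> (D x y <= (D v y).+1)%N) ->
  forall m x y, walk_len h m x y -> (D x y <= m)%N.
Proof.
move=> D0 Dh; elim=> [|m IH] x y /=; first by move/eqP->; rewrite D0.
case/existsP=> v /andP[hxv /IH w]; apply: leq_trans (Dh _ _ y hxv) _; by [].
Qed.

Lemma dist_ub n (h : rel 'I_n) m x y : (m < n)%N -> walk_len h m x y ->
  (dist h x y <= m)%N.
Proof.
move=> mn w; rewrite /dist leqNgt; apply/negP => lt.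
by have := before_find 0%N lt; rewrite nth_iota // add0n w.
Qed.



Lemma dist_lb n (h : rel 'I_n) (D : 'I_n -> 'I_n -> nat) x y :
  (forall y, D y y = 0%N) -> (forall x v y, h x v -> (D x y <= (D v y).+1)%N) ->
  (D x y <= n)%N -> (D x y <= dist h x y)%N.
Proof.
move=> D0 Dh Dn; rewrite /dist.
case: (boolP (has (fun m => walk_len h m x y) (iota 0 n))) => H.
  have := nth_find 0%N H; rewrite nth_iota; last by move: H; rewrite has_find size_iota.
  by rewrite add0n; apply: walk_lb.
by move: H; rewrite has_find size_iota -leqNgt => H; rewrite (@leq_trans n) // find_size // size_iota.
Qed.

Lemma walkS_last n (h : rel 'I_n) m x y :
  walk_len h m.+1 x y = [exists v, walk_len h m x v && h v y].
Proof.
elim: m x => [|m IH] x.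
  apply/existsP/existsP => [[v /andP[hxv /eqP <-]]|[v /andP[/eqP <- hvy]]].
    by exists x; rewrite /= eqxx.
  by exists y; rewrite /= eqxx andbT.
have -> : walk_len h m.+2 x y = [exists v, h x v && walk_len h m.+1 v y] by [].
apply/existsP/existsP => [[v /andP[hxv]]|[w /andP[]]].
  rewrite IH => /existsP[w /andP[w1 w2]]; exists w; rewrite w2 andbT /=.
  by apply/existsP; exists v; rewrite hxv.
move=> /existsP[v /andP[hxv w1]] hwy; exists v; rewrite hxv IH.
by apply/existsP; exists w; apply/andP; split.
Qed.

Lemma walk_sym n (h : rel 'I_n) m x y : (forall u v, h u v = h v u) ->
  walk_len h m x y = walk_len h m y x.
Proof.
move=> hs; elim: m x y => [|m IH] x y; first by rewrite /= eq_sym.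
rewrite walkS_last.
have -> : walk_len h m.+1 y x = [exists v, h y v && walk_len h m v x] by [].
apply/existsP/existsP => [[v /andP[w1 w2]]|[v /andP[w1 w2]]].
  exists v; apply/andP; split; first by rewrite hs.
  by move: w1; rewrite IH.
exists v; apply/andP; split; last by rewrite hs.
by move: w2; rewrite IH.
Qed.

Lemma dist_sym n (h : rel 'I_n) x y : (forall u v, h u v = h v u) ->
  dist h x y = dist h y x.
Proof. by move=> hs; rewrite /dist; apply: eq_find => m; apply: walk_sym. Qed.

Lemma dist_pos n (h : rel 'I_n) x y : x != y -> (0 < dist h x y)%N.
Proof.
move=> xy; have := @dist_lb n h (fun u v => (u != v : nat)) x y.
rewrite xy; apply => //; first by move=> z; rewrite eqxx.
  by move=> u v z _; case: (u != z); case: (v != z).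
exact: (leq_ltn_trans (leq0n x) (ltn_ord x)).
Qed.

Lemma Eset_refl n (h : rel 'I_n) y : Eset h y y = set0.
Proof. by apply/setP => x; rewrite inEset connect0 !andbF inE. Qed.

Lemma Eset_adj n (h : rel 'I_n) y z : h y z -> Eset h y z = set0.
Proof.
move=> hyz; apply/setP => x; rewrite inEset inE.
case: (x =P z) => [->|/eqP xz]; first by rewrite /= andbF.
by rewrite /= connect1 ?andbF // /av hyz eq_sym xz.
Qed.

Lemma av_sym_path n (h : rel 'I_n) x (hs : forall u v, h u v = h v u) p y :
  y != x -> path (av h x) y p ->
  path (fun u v => [&& h u v, u != x & v != x]) y p.
Proof.
elim: p y => //= v p IH y yx /andP[/andP[hyv vx] pp].
by rewrite hyv yx vx /= IH.
Qed.

Lemma av_conn_sym n (h : rel 'I_n) x (hs : forall u v, h u v = h v u) y z :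
  y != x -> z != x -> connect (av h x) y z -> connect (av h x) z y.
Proof.
move=> yx zx /connectP[p pp zl].
have e'sym : symmetric (fun u v => [&& h u v, u != x & v != x]).
  move=> u v /=; rewrite hs; congr (_ && _); exact: andbC.
have : connect (fun u v => [&& h u v, u != x & v != x]) y z.
  by apply/connectP; exists p; first exact: av_sym_path.
rewrite (sym_connect_sym e'sym); apply: connect_sub => u v /and3P[huv _ vx].
by apply: connect1; rewrite /av huv vx.
Qed.

Lemma Eset_sym n (h : rel 'I_n) y z : (forall u v, h u v = h v u) ->
  Eset h y z = Eset h z y.
Proof.
move=> hs; apply/setP => x; rewrite !inEset.
case: (x =P y) => [->|/eqP xy]; first by rewrite /= ?andbF.
case: (x =P z) => [->|/eqP xz]; first by rewrite /= ?andbF.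
rewrite /=; congr (~~ _); apply/idP/idP; apply: av_conn_sym; by rewrite // eq_sym.
Qed.

Lemma Eset_leaf n (h : rel 'I_n) a r y : (forall v, h a v = (v == r)) ->
  a != r -> y != a -> y != r -> r \in Eset h a y.
Proof.
move=> ha ar ya yr; rewrite inEset eq_sym (eq_sym r) yr ar /=. apply/negP => /connectP[[|v p] /= pp yl]; first by rewrite yl eqxx in ya.
by move: pp; rewrite /av ha; case/andP => /andP[/eqP -> ]; rewrite eqxx.
Qed.

Lemma Eset_sub n (h : rel 'I_n) y z (S : {set 'I_n}) :
  (forall x, x \notin S -> x != y -> x != z -> connect (av h x) y z) ->
  Eset h y z \subset S.
Proof.
move=> H; apply/subsetP => x; rewrite inEset => /and3P[xy xz nc].
by apply/negPn/negP => xS; rewrite H in nc.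
Qed.

Definition C k (i : 'I_k) : 'I_(k + k) := lshift k i.
Definition L k (i : 'I_k) : 'I_(k + k) := rshift k i.

Definition gk k : rel 'I_(k + k) := fun x y =>
  match split x, split y with
  | inl i, inl j => i != j
  | inl i, inr j => i == j
  | inr i, inl j => i == j
  | inr _, inr _ => false
  end.

Lemma splitC k (i : 'I_k) : split (C i) = inl i.
Proof. exact: (unsplitK (inl i)). Qed.
Lemma splitL k (i : 'I_k) : split (L i) = inr i.
Proof. exact: (unsplitK (inr i)). Qed.

Lemma gCC k (i j : 'I_k) : gk (C i) (C j) = (i != j).
Proof. by rewrite /gk !splitC. Qed.
Lemma gCL k (i j : 'I_k) : gk (C i) (L j) = (i == j).
Proof. by rewrite /gk splitC splitL. Qed.
Lemma gLC k (i j : 'I_k) : gk (L i) (C j) = (i == j).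
Proof. by rewrite /gk splitC splitL. Qed.
Lemma gLL k (i j : 'I_k) : gk (L i) (L j) = false.
Proof. by rewrite /gk !splitL. Qed.

Lemma eqCC k (i j : 'I_k) : (C i == C j) = (i == j).
Proof. exact: (inj_eq (@lshift_inj k k)). Qed.
Lemma eqLL k (i j : 'I_k) : (L i == L j) = (i == j).
Proof. exact: (inj_eq (@rshift_inj k k)). Qed.
Lemma eqCL k (i j : 'I_k) : (C i == L j) = false.
Proof. apply/eqP => /(congr1 val) /=; have := ltn_ord i; lia. Qed.
Lemma eqLC k (i j : 'I_k) : (L i == C j) = false.
Proof. by rewrite eq_sym eqCL. Qed.

Definition gE := (gCC, gCL, gLC, gLL, eqCC, eqLL, eqCL, eqLC).

Lemma ordCL k (P : 'I_(k + k) -> Prop) :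
  (forall i, P (C i)) -> (forall i, P (L i)) -> forall x, P x.
Proof. move=> HC HL x; rewrite -(splitK x); case: (split x) => i; [exact: HC|exact: HL]. Qed.

Ltac eqcases := repeat (match goal with |- context [?a == ?b] =>
  case: (@eqVneq _ a b) => [?|?]; try subst => //= end);
  try (match goal with H : is_true (?a != ?a) |- _ => by rewrite eqxx in H end).

Definition isL k (x : 'I_(k + k)) : nat := if split x is inr _ then 1%N else 0%N.
Definition ctr k (x : 'I_(k + k)) : 'I_k := match split x with inl i => i | inr i => i end.

Lemma isLC k (i : 'I_k) : isL (C i) = 0%N. Proof. by rewrite /isL splitC. Qed.
Lemma isLL k (i : 'I_k) : isL (L i) = 1%N. Proof. by rewrite /isL splitL. Qed.
Lemma ctrC k (i : 'I_k) : ctr (C i) = i. Proof. by rewrite /ctr splitC. Qed.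
Lemma ctrL k (i : 'I_k) : ctr (L i) = i. Proof. by rewrite /ctr splitL. Qed.

Definition Dg k (x y : 'I_(k + k)) : nat :=
  if x == y then 0%N else (isL x + isL y + (ctr x != ctr y))%N.

Definition dE := (isLC, isLL, ctrC, ctrL).

Lemma Dg_pot k (x v y : 'I_(k + k)) : gk x v -> (Dg x y <= (Dg v y).+1)%N.
Proof.
rewrite /Dg; move: x; apply: ordCL => i; move: v; apply: ordCL => j;
move: y; apply: ordCL => l; rewrite !gE !dE; eqcases.
Qed.

Definition g2 k (p q : 'I_k) := del_link (@gk k) (C p) (C q).

Definition D2 k (p q : 'I_k) (x y : 'I_(k + k)) : nat :=
  if x == y then 0%N else (isL x + isL y +
    (if ctr x == ctr y then 0 else
     if ((ctr x == p) && (ctr y == q)) || ((ctr x == q) && (ctr y == p)) then 2 else 1))%N.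

Lemma D2_pot k (p q : 'I_k) (x v y : 'I_(k + k)) : g2 p q x v -> (D2 p q x y <= (D2 p q v y).+1)%N.
Proof.
rewrite /D2 /g2 /del_link; move: x; apply: ordCL => i; move: v; apply: ordCL => j;
move: y; apply: ordCL => l; rewrite !gE !dE; eqcases.
Qed.

Lemma Dg_le k (x y : 'I_(k + k)) : (Dg x y <= 3)%N.
Proof. rewrite /Dg; case: (x == y) => //; case: (ctr x != ctr y); rewrite /isL; case: (split x); case: (split y) => //. Qed.

Lemma D2_le k p q (x y : 'I_(k + k)) : (D2 p q x y <= 4)%N.
Proof. rewrite /D2; case: (x == y) => //; case: ifP => _; [|case: ifP => _]; rewrite /isL; case: (split x); case: (split y) => //. Qed.

Definition D1 n (D : 'I_n -> 'I_n -> nat) (a b : 'I_n) x y :=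
  minn (D x y) (minn (D x a + 1 + D b y) (D x b + 1 + D a y)).

Lemma D1_pot n (h : rel 'I_n) D a b :
  (forall y, D y y = 0%N) -> (forall x v y, h x v -> (D x y <= (D v y).+1)%N) ->
  forall x v y, add_link h a b x v -> (D1 D a b x y <= (D1 D a b v y).+1)%N.
Proof.
move=> D0 Dh x v y; rewrite /add_link /D1 => /or3P[hxv|/andP[/eqP-> /eqP->]|/andP[/eqP-> /eqP->]].
- have := Dh _ _ y hxv; have := Dh _ _ a hxv; have := Dh _ _ b hxv; lia.
- have := D0 a; have := D0 b; lia.
- have := D0 a; have := D0 b; lia.
Qed.

Lemma D1_0 n (D : 'I_n -> 'I_n -> nat) a b : (forall y, D y y = 0%N) -> forall y, D1 D a b y y = 0%N.
Proof. by move=> D0 y; rewrite /D1 D0 min0n. Qed.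

Lemma gk_sym k (x y : 'I_(k + k)) : gk x y = gk y x.
Proof.
by move: x; apply: ordCL => i; move: y; apply: ordCL => j; rewrite !gE // eq_sym.
Qed.

Lemma gk_irr k (x : 'I_(k + k)) : ~~ gk x x.
Proof. by move: x; apply: ordCL => i; rewrite !gE ?eqxx. Qed.

Lemma gkL k (i : 'I_k) v : gk (L i) v = (v == C i).
Proof. by move: v; apply: ordCL => j; rewrite !gE // eq_sym. Qed.

Lemma g2_sym k (p q : 'I_k) (x y : 'I_(k + k)) : g2 p q x y = g2 p q y x.
Proof.
rewrite /g2 /del_link gk_sym; congr (_ && ~~ _).
by rewrite orbC; congr (_ || _); rewrite andbC.
Qed.

Lemma g2L k (p q i : 'I_k) v : g2 p q (L i) v = (v == C i).
Proof. by rewrite /g2 /del_link gkL !gE /= ?andbF ?andbT. Qed.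

Lemma g2E k (p q i j : 'I_k) :
  g2 p q (C i) (C j) = (i != j) && ~~ ((i == p) && (j == q) || (i == q) && (j == p)).
Proof. by rewrite /g2 /del_link !gE. Qed.

Lemma g2CL k (p q i j : 'I_k) : g2 p q (C i) (L j) = (i == j).
Proof. by rewrite /g2 /del_link !gE /= ?andbF ?andbT. Qed.

Definition g1 k (p q : 'I_k) := add_link (@gk k) (L p) (L q).

Lemma g1_sym k (p q : 'I_k) (x y : 'I_(k + k)) : g1 p q x y = g1 p q y x.
Proof.
rewrite /g1 /add_link gk_sym; congr (_ || _); rewrite orbC; congr (_ || _); by rewrite andbC.
Qed.

Lemma g1_gk k (p q : 'I_k) : subrel (@gk k) (g1 p q).
Proof. by move=> x y h; rewrite /g1 /add_link h. Qed.

Lemma g1_pq k (p q : 'I_k) : g1 p q (L p) (L q).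
Proof. by rewrite /g1 /add_link !eqxx orbT. Qed.

Lemma g1L k (p q i : 'I_k) v : i != p -> i != q -> g1 p q (L i) v = (v == C i).
Proof. by move=> ip iq; rewrite /g1 /add_link gkL !eqLL (negbTE ip) (negbTE iq) /= !orbF. Qed.

Lemma av_edge n (h : rel 'I_n) x u v : h u v -> v != x -> connect (av h x) u v.
Proof. by move=> huv vx; apply: connect1; rewrite /av huv vx. Qed.

Lemma conn_g k (x y z : 'I_(k + k)) : y != x -> z != x -> C (ctr y) != x -> C (ctr z) != x ->
  connect (av (@gk k) x) y z.
Proof.
move=> yx zx cy cz; apply: (@connect_trans _ _ (C (ctr y))).
  move: y yx cy; apply: ordCL => i yx; rewrite ?ctrC ?ctrL => cx; first exact: connect0.
  by apply: av_edge; rewrite // gE.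
apply: (@connect_trans _ _ (C (ctr z))).
  case: (ctr y =P ctr z) => [->|/eqP ne]; first exact: connect0.
  by apply: av_edge => //; rewrite gE.
move: z zx cz; apply: ordCL => i zx; rewrite ?ctrC ?ctrL => cx; first exact: connect0.
by apply: av_edge; rewrite // gE.
Qed.

Lemma distg_lb k (x y : 'I_(k + k)) : (2 <= k)%N -> (Dg x y <= dist (@gk k) x y)%N.
Proof.
move=> k2; apply: dist_lb; first by move=> z; rewrite /Dg eqxx.
  exact: Dg_pot.
by apply: leq_trans (Dg_le x y) _; lia.
Qed.

Lemma dist2_lb k (p q : 'I_k) (x y : 'I_(k + k)) : (2 <= k)%N -> (D2 p q x y <= dist (g2 p q) x y)%N.
Proof.
move=> k2; apply: dist_lb; first by move=> z; rewrite /D2 eqxx.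
  exact: D2_pot.
by apply: leq_trans (D2_le p q x y) _; lia.
Qed.

Lemma dist1_lb k (p q : 'I_k) (x y : 'I_(k + k)) : (2 <= k)%N ->
  (D1 (@Dg k) (L p) (L q) x y <= dist (g1 p q) x y)%N.
Proof.
move=> k2; apply: dist_lb.
- by apply: D1_0 => z; rewrite /Dg eqxx.
- apply: D1_pot; first by move=> z; rewrite /Dg eqxx.
  exact: Dg_pot.
- rewrite /D1; apply: leq_trans (geq_minl _ _) _; apply: leq_trans (Dg_le x y) _; lia.
Qed.

Lemma walk1 n (h : rel 'I_n) x y : h x y -> walk_len h 1 x y.
Proof. by move=> hxy; apply/existsP; exists y; rewrite hxy /=. Qed.

Lemma walkS n (h : rel 'I_n) m x v y : h x v -> walk_len h m v y -> walk_len h m.+1 x y.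
Proof. by move=> hxv w; apply/existsP; exists v; rewrite hxv. Qed.
Arguments walkS {n h m x} v {y}.

Local Open Scope ring_scope.

Lemma pairsum (R : numDomainType) n (a : 'I_n) (H : 'I_n -> R) :
  \sum_(y : 'I_n) \sum_(z : 'I_n | (y < z)%N)
      (if y == a then H z else if z == a then H y else 0)
  = \sum_(x | x != a) H x.
Proof.
have E1 : forall y : 'I_n, y != a ->
   \sum_(z : 'I_n | (y < z)%N) (if y == a then H z else if z == a then H y else 0)
   = if (y < a)%N then H y else 0.
  move=> y ya; rewrite (negbTE ya) big_mkcond /=.
  rewrite (eq_bigr (fun z : 'I_n => if z == a then (if (y < a)%N then H y else 0) else 0)).
    by rewrite -big_mkcond big_pred1_eq.
  by move=> z _; case: (z =P a) => [->|]; case: (y < z)%N; case: (y < a)%N.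
rewrite (bigD1 a) //= eqxx.
rewrite [X in _ + X](eq_bigr (fun y : 'I_n => if (y < a)%N then H y else 0)); last by move=> y ya; rewrite E1.
rewrite [in RHS](eq_bigr (fun x : 'I_n => (if (x < a)%N then H x else 0) + (if (a < x)%N then H x else 0))); last first.
  move=> x xa; case: ltngtP => //; [by rewrite addr0|by rewrite add0r|].
  by move=> /val_inj e; rewrite e eqxx in xa.
rewrite big_split /= addrC; congr (_ + _).
rewrite [RHS]big_mkcond [LHS]big_mkcond /=; apply: eq_bigr => x _.
by case: (x =P a) => [->|]; rewrite ?ltnn.
Qed.

Lemma rent_ub (R : numDomainType) n (cond : 'I_n -> 'I_n -> bool) (F : 'I_n -> 'I_n -> R) a H :
  (forall y z : 'I_n, (y < z)%N -> (if cond y z then F y z else 0) <=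
     (if y == a then H z else if z == a then H y else 0)) ->
  \sum_(y : 'I_n) \sum_(z : 'I_n | (y < z)%N && cond y z) F y z <= \sum_(x | x != a) H x.
Proof.
move=> Hp; rewrite -pairsum; apply: ler_sum => y _; rewrite big_mkcondr /=.
by apply: ler_sum => z yz; apply: Hp.
Qed.

Lemma rent_lb (R : numDomainType) n (cond : 'I_n -> 'I_n -> bool) (F : 'I_n -> 'I_n -> R) a H :
  (forall y z : 'I_n, (y < z)%N -> (if y == a then H z else if z == a then H y else 0)
     <= (if cond y z then F y z else 0)) ->
  \sum_(x | x != a) H x <= \sum_(y : 'I_n) \sum_(z : 'I_n | (y < z)%N && cond y z) F y z.
Proof.
move=> Hp; rewrite -pairsum; apply: ler_sum => y _; rewrite big_mkcondr /=.
by apply: ler_sum => z yz; apply: Hp.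
Qed.

Lemma sum_CL (R : numDomainType) k (F : 'I_(k + k) -> R) :
  \sum_w F w = \sum_(i < k) F (C i) + \sum_(i < k) F (L i).
Proof. exact: big_split_ord. Qed.

Lemma sum_pt (R : numDomainType) k (p : 'I_k) (w : R) :
  \sum_(i < k) (if i == p then w else 0) = w.
Proof. by rewrite -big_mkcond big_pred1_eq. Qed.

Lemma sum_cst (R : numDomainType) k (w : R) : \sum_(i < k) w = k%:R * w.
Proof. by rewrite sumr_const card_ord mulr_natl. Qed.

Lemma sum_if1 (R : numDomainType) k (p : 'I_k) (x y : R) :
  \sum_(i < k) (if i == p then x else y) = x + (k%:R - 1) * y.
Proof.
rewrite (eq_bigr (fun i => (if i == p then x - y else 0) + y)); last first.
  by move=> i _; case: (i == p); rewrite ?subrK ?add0r.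
by rewrite big_split /= sum_pt sum_cst; ring.
Qed.

Lemma sum_if2 (R : numDomainType) k (p q : 'I_k) (x y z : R) : p != q ->
  \sum_(i < k) (if i == p then x else if i == q then y else z) = x + y + (k%:R - 2) * z.
Proof.
move=> pq; rewrite (eq_bigr (fun i => (if i == p then x - z else 0) + (if i == q then y - z else 0) + z)); last first.
  move=> i _; case: (i =P p) => [->|_]; first by rewrite (negbTE pq) /=; ring.
  by case: (i == q) => /=; ring.
by rewrite !big_split /= !sum_pt sum_cst; ring.
Qed.

Lemma degR (R : numDomainType) n (h : rel 'I_n) j :
  ((degree h j)%:R : R) = \sum_v (if h j v then 1 else 0).
Proof.
rewrite /degree -sum1_card natr_sum big_mkcond; apply: eq_bigr => v _.
by rewrite inE; case: (h j v).
Qed.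

Definition bdec (R : realFieldType) (b : nat -> R) :=
  (forall i : nat, (0 < i)%N -> b i.+1 < b i) /\ (forall i : nat, (0 < i)%N -> 0 < b i).

Lemma b_anti (R : realFieldType) (b : nat -> R) : bdec b ->
  forall i j, (0 < i)%N -> (i <= j)%N -> b j <= b i.
Proof.
move=> [hd hp] i j i0; elim: j => [|j IH]; first by rewrite leqn0 => /eqP i0'; rewrite i0' in i0.
rewrite leq_eqVlt => /orP[/eqP ->//|]; rewrite ltnS => ij.
apply: le_trans (IH ij); apply/ltW/hd; exact: leq_trans ij.
Qed.


Lemma benT_le0 (R : realFieldType) (b : nat -> R) n (h : rel 'I_n) j w :
  (dist h j w <= 1)%N -> (if joined h j w && (1 < dist h j w)%N then b (dist h j w) else 0) = 0.
Proof. by rewrite ltnNge => ->; rewrite andbF. Qed.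

Lemma benT_leb (R : realFieldType) (b : nat -> R) n (h : rel 'I_n) j w m : bdec b ->
  (0 < m)%N -> (m <= dist h j w)%N ->
  (if joined h j w && (1 < dist h j w)%N then b (dist h j w) else 0) <= b m.
Proof.
move=> hb m0 md; case: ifP => _; first exact: b_anti.
by apply/ltW; case: hb => _; apply.
Qed.

Lemma benT_ge0 (R : realFieldType) (b : nat -> R) n (h : rel 'I_n) j w : bdec b ->
  0 <= (if joined h j w && (1 < dist h j w)%N then b (dist h j w) else 0).
Proof.
move=> [_ hp]; case: ifP => // /andP[_ d1]; apply/ltW/hp; exact: ltn_trans d1.
Qed.

Lemma benT_geb (R : realFieldType) (b : nat -> R) n (h : rel 'I_n) j w m : bdec b ->
  joined h j w -> (1 < dist h j w)%N -> (dist h j w <= m)%N ->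
  b m <= (if joined h j w && (1 < dist h j w)%N then b (dist h j w) else 0).
Proof. by move=> hb jw d1 dm; rewrite jw d1 /=; apply: b_anti => //; exact: ltn_trans d1. Qed.

Lemma costT_0 (R : realFieldType) (b : nat -> R) (gam : R) n (h : rel 'I_n) j w :
  Eset h j w = set0 ->
  (if joined h j w && (Eset h j w != set0) then gam * b (dist h j w) else 0) = 0.
Proof. by move=> ->; rewrite eqxx andbF. Qed.

Lemma costT_le (R : realFieldType) (b : nat -> R) (gam : R) n (h : rel 'I_n) j w m : bdec b ->
  0 <= gam -> (0 < m)%N -> (m <= dist h j w)%N ->
  (if joined h j w && (Eset h j w != set0) then gam * b (dist h j w) else 0) <= gam * b m.
Proof.
move=> hb g0 m0 md; case: ifP => _; first by apply: ler_wpM2l => //; exact: b_anti.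
by apply: mulr_ge0 => //; apply/ltW; case: hb => _; apply.
Qed.

Lemma Eset_neq n (h : rel 'I_n) y z x : x \in Eset h y z -> y != z.
Proof. by apply: contraTneq => ->; rewrite Eset_refl inE. Qed.

Lemma costT_ge0 (R : realFieldType) (b : nat -> R) (gam : R) n (h : rel 'I_n) j w : bdec b ->
  0 <= gam ->
  0 <= (if joined h j w && (Eset h j w != set0) then gam * b (dist h j w) else 0).
Proof.
move=> [_ hp] g0; case: ifP => // /andP[_ /set0Pn[x /Eset_neq jw]].
by apply: mulr_ge0 => //; apply/ltW/hp/dist_pos.
Qed.

Lemma costT_ge (R : realFieldType) (b : nat -> R) (gam : R) n (h : rel 'I_n) j w x m : bdec b ->
  0 <= gam -> joined h j w -> x \in Eset h j w -> (dist h j w <= m)%N ->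
  gam * b m <= (if joined h j w && (Eset h j w != set0) then gam * b (dist h j w) else 0).
Proof.
move=> hb g0 jw xE dm; have -> : Eset h j w != set0 by apply/set0Pn; exists x.
rewrite jw /=; apply: ler_wpM2l => //; apply: b_anti => //; exact/dist_pos/Eset_neq/xE.
Qed.

Definition rentF (R : realFieldType) (b : nat -> R) (gam : R) n (h : rel 'I_n) y z :=
  gam / (#|Eset h y z|)%:R * 2 * b (dist h y z).

Lemma rentT_0 (R : realFieldType) (b : nat -> R) (gam : R) n (h : rel 'I_n) j y z :
  j \notin Eset h y z ->
  (if joined h y z && (j \in Eset h y z) then rentF b gam h y z else 0) = 0.
Proof. by move/negbTE => ->; rewrite andbF. Qed.

Lemma rentT_le (R : realFieldType) (b : nat -> R) (gam : R) n (h : rel 'I_n) j y z m e : bdec b ->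
  0 <= gam -> (0 < m)%N -> (m <= dist h y z)%N -> (0 < e)%N -> (e <= #|Eset h y z|)%N ->
  (if joined h y z && (j \in Eset h y z) then rentF b gam h y z else 0) <= gam / e%:R * 2 * b m.
Proof.
move=> hb g0 m0 md e0 eE; have bm : 0 < b m by case: hb => _; apply.
case: ifP => _; last by rewrite !mulr_ge0 // ?invr_ge0 // ltW.
rewrite /rentF -!mulrA; apply: ler_wpM2l => //.
apply: ler_pM => //; first by rewrite invr_ge0.
  by apply: mulr_ge0 => //; apply/ltW; case: hb => _; apply; exact: leq_trans md.
  rewrite lef_pV2 ?posrE ?ltr0n // ?ler_nat //; exact: leq_trans eE.
by apply: ler_wpM2l => //; exact: b_anti.
Qed.

Lemma rentT_ge0 (R : realFieldType) (b : nat -> R) (gam : R) n (h : rel 'I_n) j y z : bdec b ->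
  0 <= gam -> 0 <= (if joined h y z && (j \in Eset h y z) then rentF b gam h y z else 0).
Proof.
move=> [_ hp] g0; case: ifP => // /andP[_ /Eset_neq yz].
by rewrite /rentF !mulr_ge0 // ?invr_ge0 // ltW // hp // dist_pos.
Qed.

Lemma rentT_ge (R : realFieldType) (b : nat -> R) (gam : R) n (h : rel 'I_n) j y z m e : bdec b ->
  0 <= gam -> joined h y z -> j \in Eset h y z -> (dist h y z <= m)%N -> (#|Eset h y z| <= e)%N ->
  gam / e%:R * 2 * b m <= (if joined h y z && (j \in Eset h y z) then rentF b gam h y z else 0).
Proof.
move=> hb g0 jyz jE dm eE; rewrite jyz jE /rentF -!mulrA.
have e1 : (0 < #|Eset h y z|)%N by apply/card_gt0P; exists j.
apply: ler_wpM2l => //; apply: ler_pM => //.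
- by rewrite invr_ge0.
- by apply: mulr_ge0 => //; apply/ltW; case: hb => _; apply; apply: (leq_trans _ dm); exact: dist_pos (Eset_neq jE).
- rewrite lef_pV2 ?posrE ?ltr0n ?ler_nat //; exact: leq_trans eE.
- by apply: ler_wpM2l => //; apply: b_anti => //; apply: dist_pos (Eset_neq jE).
Qed.

Lemma sum_CL_le (R : numDomainType) k (F : 'I_(k + k) -> R) (fC fL : 'I_k -> R) :
  (forall i, F (C i) <= fC i) -> (forall i, F (L i) <= fL i) ->
  \sum_w F w <= \sum_i fC i + \sum_i fL i.
Proof. by move=> h1 h2; rewrite sum_CL; apply: lerD; apply: ler_sum => i _. Qed.

Lemma sum_CL_ge (R : numDomainType) k (F : 'I_(k + k) -> R) (fC fL : 'I_k -> R) :
  (forall i, fC i <= F (C i)) -> (forall i, fL i <= F (L i)) ->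
  \sum_i fC i + \sum_i fL i <= \sum_w F w.
Proof. by move=> h1 h2; rewrite sum_CL; apply: lerD; apply: ler_sum => i _. Qed.

Lemma sum_CL_eq (R : numDomainType) k (F : 'I_(k + k) -> R) (fC fL : 'I_k -> R) :
  (forall i, F (C i) = fC i) -> (forall i, F (L i) = fL i) ->
  \sum_w F w = \sum_i fC i + \sum_i fL i.
Proof. by move=> h1 h2; rewrite sum_CL; congr (_ + _); apply: eq_bigr => i _. Qed.

Lemma sum_ne0 (R : numDomainType) n (a : 'I_n) (H : 'I_n -> R) : H a = 0 ->
  \sum_(x | x != a) H x = \sum_x H x.
Proof. by move=> Ha; rewrite [RHS](bigD1 a) //= Ha add0r. Qed.

Lemma eqle (R : numDomainType) (x y : R) : x = y -> x <= y.
Proof. by move=> ->. Qed.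

Definition cl (R : Type) k (fC fL : 'I_k -> R) (x : 'I_(k + k)) : R :=
  match split x with inl i => fC i | inr i => fL i end.
Lemma clC (R : Type) k (fC fL : 'I_k -> R) i : cl fC fL (C i) = fC i.
Proof. by rewrite /cl splitC. Qed.
Lemma clL (R : Type) k (fC fL : 'I_k -> R) i : cl fC fL (L i) = fL i.
Proof. by rewrite /cl splitL. Qed.

Lemma sum_cl (R : numDomainType) k (fC fL : 'I_k -> R) :
  \sum_x cl fC fL x = \sum_i fC i + \sum_i fL i.
Proof. by apply: sum_CL_eq => i; rewrite ?clC ?clL. Qed.

Lemma rentT_sym (R : realFieldType) (b : nat -> R) (gam : R) n (h : rel 'I_n) j y z :
  (forall u v, h u v = h v u) ->
  (if joined h y z && (j \in Eset h y z) then rentF b gam h y z else 0) =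
  (if joined h z y && (j \in Eset h z y) then rentF b gam h z y else 0).
Proof.
move=> hs; have sy : symmetric h by move=> u v; exact: hs.
rewrite /joined (sym_connect_sym sy) [Eset h y z](Eset_sym _ _ hs) /rentF [dist h y z](dist_sym _ _ hs).
by rewrite [Eset h y z](Eset_sym _ _ hs).
Qed.



Ltac leaf_tac := apply: Eset_leaf; try exact: gkL; by rewrite !gE; eqcases.

Lemma U1 (R : realFieldType) (b : nat -> R) c gam k (p : 'I_k) : bdec b -> 0 <= gam -> (3 <= k)%N ->
  utility b c gam (@gk k) (L p) <= (b 1%N - c) + (k%:R - 1) * (b 2%N + b 3%N)
     - gam * ((k%:R - 1) * (b 2%N + b 3%N)).
Proof.
move=> hb g0 k3; have k2 : (2 <= k)%N by lia.
have n1 : (1 < k + k)%N by lia.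
have n2 : (2 < k + k)%N by lia.
have n3 : (3 < k + k)%N by lia.
rewrite /utility degR.
have deg : \sum_v (if gk (L p) v then 1 else 0) = 1 :> R.
  rewrite (sum_CL_eq (fC := fun i => if i == p then 1 else 0) (fL := fun _ => 0)).
  - by rewrite sum_pt big1 ?addr0.
  - by move=> i; rewrite gE eq_sym.
  - by move=> i; rewrite gE.
have ben : \sum_(w | joined (@gk k) (L p) w && (1 < dist (@gk k) (L p) w)%N) b (dist (@gk k) (L p) w)
    <= (k%:R - 1) * b 2%N + (k%:R - 1) * b 3%N.
  rewrite big_mkcond; apply: le_trans.
    apply: (sum_CL_le (fC := fun i => if i == p then 0 else b 2%N)
                      (fL := fun i => if i == p then 0 else b 3%N)) => i.
    + case: (i =P p) => [->|/eqP ip].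
        by rewrite benT_le0 // dist_ub // walk1 // gE.
      apply: benT_leb => //; have := distg_lb (L p) (C i) k2; rewrite /Dg !gE !dE /=.
      by rewrite eq_sym (negbTE ip).
    + case: (i =P p) => [->|/eqP ip].
        rewrite benT_le0 // (@leq_trans 0) //; apply: dist_ub; [lia | exact: eqxx].
      apply: benT_leb => //; have := distg_lb (L p) (L i) k2; rewrite /Dg !gE !dE /=.
      by rewrite eq_sym (negbTE ip).
  by apply: eqle; rewrite !sum_if1; ring.
have cost : gam * ((k%:R - 1) * b 2%N) + gam * ((k%:R - 1) * b 3%N) <=
    \sum_(w | joined (@gk k) (L p) w && (Eset (@gk k) (L p) w != set0)) gam * b (dist (@gk k) (L p) w).
  rewrite big_mkcond; apply: le_trans; last first.
    apply: (sum_CL_ge (fC := fun i => if i == p then 0 else gam * b 2%N)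
                      (fL := fun i => if i == p then 0 else gam * b 3%N)) => i.
    + case: (i =P p) => [->|/eqP ip]; first exact: costT_ge0.
      have w : walk_len (@gk k) 2 (L p) (C i).
        by apply: (walkS (C p)); [rewrite gE | apply: walk1; rewrite gE eq_sym].
      apply: (@costT_ge _ _ _ _ _ _ _ (C p)) => //.
      * exact: walk_connect w.
      * leaf_tac.
      * exact: dist_ub w.
    + case: (i =P p) => [->|/eqP ip]; first exact: costT_ge0.
      have w : walk_len (@gk k) 3 (L p) (L i).
        apply: (walkS (C p)); first by rewrite gE.
        by apply: (walkS (C i)); [rewrite gE eq_sym | apply: walk1; rewrite gE].
      apply: (@costT_ge _ _ _ _ _ _ _ (C p)) => //.
      * exact: walk_connect w.
      * leaf_tac.
      * exact: dist_ub w.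
  by apply: eqle; rewrite !sum_if1; ring.
have rent : \sum_(y : 'I_(k + k)) \sum_(z : 'I_(k + k) | [&& (y < z)%N, joined (@gk k) y z & L p \in Eset (@gk k) y z])
       gam / (#|Eset (@gk k) y z|)%:R * 2 * b (dist (@gk k) y z) = 0.
  apply: big1 => y _; apply: big1 => z /and3P[_ _].
  rewrite inEset => /and3P[py pz]; rewrite conn_g //.
  - by rewrite eq_sym.
  - by rewrite eq_sym.
  - by move: y py; apply: ordCL => i; rewrite ?ctrC ?ctrL ?gE.
  - by move: z pz; apply: ordCL => i; rewrite ?ctrC ?ctrL ?gE.
rewrite deg rent; lra.
Qed.



Lemma rentF_ge0 (R : realFieldType) (b : nat -> R) gam n (h : rel 'I_n) j y z : bdec b -> 0 <= gam ->
  j \in Eset h y z -> 0 <= rentF b gam h y z.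
Proof.
move=> [_ hp] g0 /Eset_neq yz.
by rewrite /rentF !mulr_ge0 // ?invr_ge0 // ltW // hp // dist_pos.
Qed.

Lemma Eset_g1_C k (p q i : 'I_k) : p != q -> Eset (g1 p q) (L p) (C i) = set0.
Proof.
move=> pq; apply/eqP; rewrite -subset0; apply: Eset_sub => x _ xLp xCi.
case: (x =P C p) => [xe|/eqP xCp].
  subst x; rewrite eqCC in xCi.
  apply: (@connect_trans _ _ (L q)); first by apply: av_edge; rewrite ?g1_pq // eqLC.
  apply: (@connect_trans _ _ (C q)).
    by apply: av_edge; [rewrite g1_gk // gE | rewrite eqCC eq_sym].
  case: (i =P q) => [->|/eqP iq]; first exact: connect0.
  by apply: av_edge; [rewrite g1_gk // gE eq_sym | rewrite eqCC eq_sym].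
apply: (@connect_trans _ _ (C p)).
  by apply: av_edge; [rewrite g1_gk // gE | rewrite eq_sym].
case: (i =P p) => [->|/eqP ip]; first exact: connect0.
by apply: av_edge; [rewrite g1_gk // gE eq_sym | rewrite eq_sym].
Qed.

Lemma U2 (R : realFieldType) (b : nat -> R) c gam k (p q : 'I_k) : bdec b -> 0 <= gam -> (3 <= k)%N ->
  p != q ->
  2%:R * (b 1%N - c) + (k%:R - 1) * b 2%N + (k%:R - 2) * b 3%N - gam * ((k%:R - 2) * b 3%N)
  <= utility b c gam (g1 p q) (L p).
Proof.
move=> hb g0 k3 pq; have k2 : (2 <= k)%N by lia.
have n1 : (1 < k + k)%N by lia.
have n2 : (2 < k + k)%N by lia.
have n3 : (3 < k + k)%N by lia.
have qp : q != p by rewrite eq_sym.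
rewrite /utility degR.
have deg : \sum_v (if g1 p q (L p) v then 1 else 0) = 2%:R :> R.
  rewrite (sum_CL_eq (fC := fun i => if i == p then 1 else 0) (fL := fun i => if i == q then 1 else 0)).
  - by rewrite !sum_pt.
  - by move=> i; rewrite /g1 /add_link !gE; eqcases.
  - by move=> i; rewrite /g1 /add_link !gE; eqcases.
have ben : (k%:R - 1) * b 2%N + (k%:R - 2) * b 3%N <=
    \sum_(w | joined (g1 p q) (L p) w && (1 < dist (g1 p q) (L p) w)%N) b (dist (g1 p q) (L p) w).
  rewrite big_mkcond; apply: le_trans; last first.
    apply: (sum_CL_ge (fC := fun i => if i == p then 0 else b 2%N)
                      (fL := fun i => if i == p then 0 else if i == q then 0 else b 3%N)) => i.
    + case: (i =P p) => [->|/eqP ip]; first exact: benT_ge0.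
      have w2 : walk_len (g1 p q) 2 (L p) (C i).
        apply: walk_mono (g1_gk p q) _; apply: (walkS (C p)); first by rewrite gE.
        by apply: walk1; rewrite gE eq_sym.
      apply: benT_geb => //; first exact: walk_connect w2.
        have := dist1_lb p q (L p) (C i) k2; rewrite /D1 /Dg !gE !dE /=; eqcases; lia.
      exact: dist_ub w2.
    + case: (i =P p) => [->|/eqP ip]; first exact: benT_ge0.
      case: (i =P q) => [->|/eqP iq]; first exact: benT_ge0.
      have w3 : walk_len (g1 p q) 3 (L p) (L i).
        apply: walk_mono (g1_gk p q) _; apply: (walkS (C p)); first by rewrite gE.
        apply: (walkS (C i)); first by rewrite gE eq_sym.
        by apply: walk1; rewrite gE.
      apply: benT_geb => //; first exact: walk_connect w3.
        have := dist1_lb p q (L p) (L i) k2; rewrite /D1 /Dg !gE !dE /=; eqcases; lia.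
      exact: dist_ub w3.
  by apply: eqle; rewrite sum_if1 sum_if2 //; ring.
have cost : \sum_(w | joined (g1 p q) (L p) w && (Eset (g1 p q) (L p) w != set0)) gam * b (dist (g1 p q) (L p) w)
    <= gam * ((k%:R - 2) * b 3%N).
  rewrite big_mkcond; apply: le_trans.
    apply: (sum_CL_le (fC := fun i => 0)
                      (fL := fun i => if i == p then 0 else if i == q then 0 else gam * b 3%N)) => i.
    + by rewrite costT_0 // Eset_g1_C.
    + case: (i =P p) => [->|/eqP ip]; first by rewrite costT_0 // Eset_refl.
      case: (i =P q) => [->|/eqP iq]; first by rewrite costT_0 // Eset_adj // g1_pq.
      apply: costT_le => //.
      have := dist1_lb p q (L p) (L i) k2; rewrite /D1 /Dg !gE !dE /=; eqcases; lia.
  by apply: eqle; rewrite sum_if2 // big1 //; ring.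
have rent : 0 <= \sum_(y : 'I_(k + k)) \sum_(z : 'I_(k + k) | [&& (y < z)%N, joined (g1 p q) y z & L p \in Eset (g1 p q) y z])
       gam / (#|Eset (g1 p q) y z|)%:R * 2 * b (dist (g1 p q) y z).
  apply: sumr_ge0 => y _; apply: sumr_ge0 => z /and3P[_ _ H].
  exact: (rentF_ge0 hb g0 H).
rewrite deg; lra.
Qed.




Lemma U3 (R : realFieldType) (b : nat -> R) c gam k (p : 'I_k) : bdec b -> 0 <= gam -> (3 <= k)%N ->
  utility b c gam (@gk k) (C p) <= k%:R * (b 1%N - c) + (k%:R - 1) * b 2%N
     - gam * ((k%:R - 1) * b 2%N) + gam * ((k%:R - 1) * (2%:R * b 2%N + b 3%N)).
Proof.
move=> hb g0 k3; have k2 : (2 <= k)%N by lia.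
have n1 : (1 < k + k)%N by lia.
have n2 : (2 < k + k)%N by lia.
have n3 : (3 < k + k)%N by lia.
have gs := @gk_sym k.
rewrite /utility degR.
have deg : \sum_v (if gk (C p) v then 1 else 0) = k%:R :> R.
  rewrite (sum_CL_eq (fC := fun i => if i == p then 0 else 1) (fL := fun i => if i == p then 1 else 0)).
  - by rewrite sum_if1 sum_pt; ring.
  - by move=> i; rewrite gE eq_sym; case: (i == p).
  - by move=> i; rewrite gE eq_sym.
have ben : \sum_(w | joined (@gk k) (C p) w && (1 < dist (@gk k) (C p) w)%N) b (dist (@gk k) (C p) w)
    <= (k%:R - 1) * b 2%N.
  rewrite big_mkcond; apply: le_trans.
    apply: (sum_CL_le (fC := fun i => 0)
                      (fL := fun i => if i == p then 0 else b 2%N)) => i.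
    + case: (i =P p) => [->|/eqP ip].
        by rewrite benT_le0 // (@leq_trans 0) //; apply: dist_ub; [lia | exact: eqxx].
      by rewrite benT_le0 // dist_ub // walk1 // gE eq_sym.
    + case: (i =P p) => [->|/eqP ip].
        by rewrite benT_le0 // dist_ub // walk1 // gE.
      apply: benT_leb => //; have := distg_lb (C p) (L i) k2; rewrite /Dg !gE !dE /=.
      by rewrite eq_sym (negbTE ip).
  by apply: eqle; rewrite sum_if1 big1 //; ring.
have cost : gam * ((k%:R - 1) * b 2%N) <=
    \sum_(w | joined (@gk k) (C p) w && (Eset (@gk k) (C p) w != set0)) gam * b (dist (@gk k) (C p) w).
  rewrite big_mkcond; apply: le_trans; last first.
    apply: (sum_CL_ge (fC := fun i => 0)
                      (fL := fun i => if i == p then 0 else gam * b 2%N)) => i.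
    + exact: costT_ge0.
    + case: (i =P p) => [->|/eqP ip]; first exact: costT_ge0.
      have w2 : walk_len (@gk k) 2 (C p) (L i).
        apply: (walkS (C i)); first by rewrite gE eq_sym.
        by apply: walk1; rewrite gE.
      apply: (@costT_ge _ _ _ _ _ _ _ (C i)) => //.
      * exact: walk_connect w2.
      * rewrite Eset_sym //; leaf_tac.
      * exact: dist_ub w2.
  by apply: eqle; rewrite sum_if1 big1 //; ring.
have key : forall z, z != L p ->
   (if joined (@gk k) (L p) z && (C p \in Eset (@gk k) (L p) z) then rentF b gam (@gk k) (L p) z else 0)
   <= cl (fun i => if i == p then 0 else gam / 1%:R * 2 * b 2%N)
         (fun i => if i == p then 0 else gam / 2%:R * 2 * b 3%N) z.
  move=> z; move: z; apply: ordCL => i zp; rewrite ?clC ?clL.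
  - case: (i =P p) => [->|/eqP ip].
      by rewrite rentT_0 // inEset eqxx /= andbF.
    apply: rentT_le => //.
      by have := distg_lb (L p) (C i) k2; rewrite /Dg !gE !dE /= eq_sym (negbTE ip).
    apply/card_gt0P; exists (C p); leaf_tac.
  - case: (i =P p) => [ip|/eqP ip]; first by rewrite ip eqxx in zp.
    apply: rentT_le => //.
      by have := distg_lb (L p) (L i) k2; rewrite /Dg !gE !dE /= eq_sym (negbTE ip).
    have -> : 2%N = #|[set C p; C i]| by rewrite cards2 eqCC eq_sym ip.
    apply: subset_leq_card; apply/subsetP => x /set2P[] ->.
      leaf_tac.
    rewrite Eset_sym //; leaf_tac.
have rent : \sum_(y : 'I_(k + k)) \sum_(z : 'I_(k + k) | [&& (y < z)%N, joined (@gk k) y z & C p \in Eset (@gk k) y z])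
       gam / (#|Eset (@gk k) y z|)%:R * 2 * b (dist (@gk k) y z)
    <= gam * ((k%:R - 1) * (2%:R * b 2%N + b 3%N)).
  have ctrp : forall y : 'I_(k + k), y != L p -> C p != y -> C (ctr y) != C p.
    by apply: ordCL => i; rewrite ?ctrC ?ctrL !gE; eqcases.
  apply: le_trans.
    apply: (rent_ub (cond := fun y z => joined (@gk k) y z && (C p \in Eset (@gk k) y z))
             (F := rentF b gam (@gk k)) (a := L p)
             (H := cl (fun i => if i == p then 0 else gam / 1%:R * 2 * b 2%N)
                      (fun i => if i == p then 0 else gam / 2%:R * 2 * b 3%N))).
    move=> y z yz; case: (y =P L p) => [yp|/eqP yp].
      by subst y; apply: key; apply/eqP => zp; move: yz; rewrite zp ltnn.

    case: (z =P L p) => [->|/eqP zp].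
      by rewrite rentT_sym //; apply: key.
    rewrite rentT_0 //; rewrite inEset; apply/negP => /and3P[py pz].
    rewrite conn_g //.
    - by rewrite eq_sym.
    - by rewrite eq_sym.
    - by apply: ctrp.
    - by apply: ctrp.
  rewrite sum_ne0 ?clL ?eqxx // sum_cl sum_if1 sum_if1; apply: eqle.
  by rewrite divr1; field.
rewrite deg; lra.
Qed.



Ltac e2 := rewrite ?g2L ?g2E ?g2CL ?gE; eqcases.
Ltac leaf2 := apply: Eset_leaf; try exact: g2L; by rewrite !gE; eqcases.
Ltac avstep v := apply: (@connect_trans _ _ v); first (apply: av_edge; [e2 | by rewrite eq_sym]).
Ltac avlast := apply: av_edge; [e2 | by rewrite eq_sym].

Lemma U4 (R : realFieldType) (b : nat -> R) c gam k (p q s : 'I_k) : bdec b -> 0 <= gam -> (3 <= k)%N ->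
  p != q -> p != s -> q != s ->
  (k%:R - 1) * (b 1%N - c) + ((k%:R - 1) * b 2%N + b 3%N) - gam * ((k%:R - 1) * b 2%N + b 3%N)
  + gam * ((k%:R - 2) * (2%:R * b 2%N + b 3%N) + b 3%N) + gam / (k + k)%:R * 2 * b 4%N
  <= utility b c gam (g2 p q) (C p).
Proof.
move=> hb g0 k3 pq ps qs; have k2 : (2 <= k)%N by lia.
have n1 : (1 < k + k)%N by lia.
have n2 : (2 < k + k)%N by lia.
have n3 : (3 < k + k)%N by lia.
have n4 : (4 < k + k)%N by lia.
have gs := @g2_sym k p q.
rewrite /utility degR.
have deg : \sum_v (if g2 p q (C p) v then 1 else 0) = k%:R - 1 :> R.
  rewrite (sum_CL_eq (fC := fun i => if i == p then 0 else if i == q then 0 else 1)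
                     (fL := fun i => if i == p then 1 else 0)).
  - by rewrite sum_if2 // sum_pt; ring.
  - by move=> i; e2.
  - by move=> i; e2.
have wCq : walk_len (g2 p q) 2 (C p) (C q).
  by apply: (walkS (C s)); [e2 | apply: walk1; e2].
have wLq : walk_len (g2 p q) 3 (C p) (L q).
  by apply: (walkS (C s)); [e2 | apply: (walkS (C q)); [e2 | apply: walk1; e2]].
have wLi : forall i, i != p -> i != q -> walk_len (g2 p q) 2 (C p) (L i).
  by move=> i ip iq; apply: (walkS (C i)); [e2 | apply: walk1; e2].
have ben : (k%:R - 1) * b 2%N + b 3%N <=
    \sum_(w | joined (g2 p q) (C p) w && (1 < dist (g2 p q) (C p) w)%N) b (dist (g2 p q) (C p) w).
  rewrite big_mkcond; apply: le_trans; last first.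
    apply: (sum_CL_ge (fC := fun i => if i == q then b 2%N else 0)
                      (fL := fun i => if i == p then 0 else if i == q then b 3%N else b 2%N)) => i.
    + case: (i =P q) => [->|/eqP iq]; last exact: benT_ge0.
      apply: benT_geb => //; first exact: walk_connect wCq.
        have := dist2_lb p q (C p) (C q) k2; rewrite /D2 !gE !dE /=; eqcases; lia.
      exact: dist_ub wCq.
    + case: (i =P p) => [->|/eqP ip]; first exact: benT_ge0.
      case: (i =P q) => [->|/eqP iq].
        apply: benT_geb => //; first exact: walk_connect wLq.
          have := dist2_lb p q (C p) (L q) k2; rewrite /D2 !gE !dE /=; eqcases; lia.
        exact: dist_ub wLq.
      apply: benT_geb => //; first exact: walk_connect (wLi i ip iq).
        have := dist2_lb p q (C p) (L i) k2; rewrite /D2 !gE !dE /=; eqcases; lia.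
      exact: dist_ub (wLi i ip iq).
  by apply: eqle; rewrite sum_if2 // (eq_bigr (fun i => if i == q then b 2%N else 0)) // sum_pt; ring.
have cost : \sum_(w | joined (g2 p q) (C p) w && (Eset (g2 p q) (C p) w != set0)) gam * b (dist (g2 p q) (C p) w)
    <= gam * ((k%:R - 1) * b 2%N + b 3%N).
  rewrite big_mkcond; apply: le_trans.
    apply: (sum_CL_le (fC := fun i => if i == q then gam * b 2%N else 0)
                      (fL := fun i => if i == p then 0 else if i == q then gam * b 3%N else gam * b 2%N)) => i.
    + case: (i =P q) => [->|/eqP iq].
        apply: costT_le => //.
        have := dist2_lb p q (C p) (C q) k2; rewrite /D2 !gE !dE /=; eqcases; lia.
      case: (i =P p) => [->|/eqP ip]; first by rewrite costT_0 // Eset_refl.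
      by rewrite costT_0 // Eset_adj //; e2.
    + case: (i =P p) => [->|/eqP ip]; first by rewrite costT_0 // Eset_adj //; e2.
      case: (i =P q) => [->|/eqP iq].
        apply: costT_le => //.
        have := dist2_lb p q (C p) (L q) k2; rewrite /D2 !gE !dE /=; eqcases; lia.
      apply: costT_le => //.
      have := dist2_lb p q (C p) (L i) k2; rewrite /D2 !gE !dE /=; eqcases; lia.
  by apply: eqle; rewrite sum_if2 // (eq_bigr (fun i => if i == q then gam * b 2%N else 0)) // sum_pt; ring.
have HL0 : forall i, i != p -> walk_len (g2 p q) 1 (L p) (C p) by move=> *; apply: walk1; e2.
have key : forall z, z != L p ->
   cl (fun i => if i == p then 0 else if i == q then gam / 2%:R * 2 * b 3%N else gam / 1%:R * 2 * b 2%N)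
      (fun i => if i == p then 0 else if i == q then gam / (k + k)%:R * 2 * b 4%N else gam / 2%:R * 2 * b 3%N) z
   <= (if joined (g2 p q) (L p) z && (C p \in Eset (g2 p q) (L p) z) then rentF b gam (g2 p q) (L p) z else 0).
  apply: ordCL => i zp; rewrite ?clC ?clL.
  - case: (i =P p) => [->|/eqP ip]; first exact: rentT_ge0.
    case: (i =P q) => [->|/eqP iq].
      have w : walk_len (g2 p q) 3 (L p) (C q) by apply: (walkS (C p)); [e2 | exact: wCq].
      apply: rentT_ge => //; [exact: walk_connect w | leaf2 | exact: dist_ub w |].
      apply: (@leq_trans #|[set C p; C s]|); last by rewrite cards2; case: (_ != _).
      apply: subset_leq_card; apply: Eset_sub => x; rewrite !inE negb_or => /andP[xp xs] xy xz.
      by avstep (C p); avstep (C s); avlast.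
    have w : walk_len (g2 p q) 2 (L p) (C i) by apply: (walkS (C p)); [e2 | apply: walk1; e2].
    apply: rentT_ge => //; [exact: walk_connect w | leaf2 | exact: dist_ub w |].
    apply: (@leq_trans #|[set C p]|); last by rewrite cards1.
    apply: subset_leq_card; apply: Eset_sub => x; rewrite !inE => xp xy xz.
    by avstep (C p); avlast.
  - case: (i =P p) => [ip|/eqP ip]; first by rewrite ip eqxx in zp.
    case: (i =P q) => [->|/eqP iq].
      have w : walk_len (g2 p q) 4 (L p) (L q) by apply: (walkS (C p)); [e2 | exact: wLq].
      apply: rentT_ge => //; [exact: walk_connect w | leaf2 | exact: dist_ub w |].
      by rewrite -[X in (_ <= X)%N](card_ord (k + k)) max_card.
    have w : walk_len (g2 p q) 3 (L p) (L i) by apply: (walkS (C p)); [e2 | exact: wLi].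
    apply: rentT_ge => //; [exact: walk_connect w | leaf2 | exact: dist_ub w |].
    apply: (@leq_trans #|[set C p; C i]|); last by rewrite cards2; case: (_ != _).
    apply: subset_leq_card; apply: Eset_sub => x; rewrite !inE negb_or => /andP[xp xs] xy xz.
    by avstep (C p); avstep (C i); avlast.
have rent : gam * ((k%:R - 2) * (2%:R * b 2%N + b 3%N) + b 3%N) + gam / (k + k)%:R * 2 * b 4%N <=
  \sum_(y : 'I_(k + k)) \sum_(z : 'I_(k + k) | [&& (y < z)%N, joined (g2 p q) y z & C p \in Eset (g2 p q) y z])
       gam / (#|Eset (g2 p q) y z|)%:R * 2 * b (dist (g2 p q) y z).
  apply: le_trans; last first.
    apply: (rent_lb (cond := fun y z => joined (g2 p q) y z && (C p \in Eset (g2 p q) y z))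
             (F := rentF b gam (g2 p q)) (a := L p)).
    move=> y z yz; case: (y =P L p) => [yp|/eqP yp].
      by subst y; apply: key; apply/eqP => zp; move: yz; rewrite zp ltnn.
    case: (z =P L p) => [->|/eqP zp]; first by rewrite rentT_sym //; apply: key.
    exact: rentT_ge0.
  rewrite sum_ne0 ?clL ?eqxx // sum_cl !sum_if2 //; apply: eqle.
  field; rewrite -natrD pnatr_eq0; lia.
rewrite deg; lra.
Qed.


Lemma gk_simple k : simple_graph (@gk k).
Proof. split; [exact: gk_sym | exact: gk_irr]. Qed.

Lemma gk_kstar k : k_star k (@gk k).
Proof.
set Cs := [set C i | i in 'I_k].
have inC : forall i, C i \in Cs by move=> i; apply: imset_f.
have ninL : forall i, L i \notin Cs.
  by move=> i; apply/imsetP => [[j _ /eqP]]; rewrite eqLC.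
have lv : forall i, leaves (@gk k) Cs (C i) = 1%N.
  move=> i; rewrite /leaves (_ : [set l | (l \notin Cs) && gk (C i) l] = [set L i]) ?cards1 //.
  apply/setP => l; rewrite !inE.
  move: l; apply: ordCL => j; rewrite ?inC ?ninL /= !gE // eq_sym.
exists Cs; split.
- by rewrite card_imset ?card_ord //; exact: lshift_inj.
- move=> u v /imsetP[i _ ->] /imsetP[j _ ->]; by rewrite gE eqCC.
- apply: ordCL => i; first by rewrite inC.
  by move=> _; exists (C i) => // v; rewrite gkL.
- by move=> cc /imsetP[i _ ->]; rewrite lv.
- by move=> cc cc' /imsetP[i _ ->] /imsetP[j _ ->]; rewrite !lv.
Qed.

Lemma g1_comm k (p q : 'I_k) : g1 q p = g1 p q.
Proof.
apply: functional_extensionality => x; apply: functional_extensionality => y.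
by rewrite /g1 /add_link; congr (_ || _); rewrite orbC.
Qed.

Theorem lemma1 (R : realFieldType) (b : nat -> R) (c gam : R) (k : nat) :
  (3 <= k)%N ->
  (forall i : nat, (0 < i)%N -> b i.+1 < b i) ->
  (forall i : nat, (0 < i)%N -> 0 < b i) ->
  0 <= gam -> gam < 1 ->
  (forall (n : nat) (g : rel 'I_n), (2 * k <= n)%N ->
     simple_graph g -> k_star k g -> pairwise_stable b c gam g) ->
  gam = 0 /\ c = b 1%N - b 3%N.
Proof.
move=> k3 hd hp g0 g1' Hst.
have hb : bdec b by split.
have [Ha Hb] := Hst (k + k)%N (@gk k) ltac:(lia) (gk_simple k) (gk_kstar k).
have k0 : (0 < k)%N by lia.
have k1 : (1 < k)%N by lia.
have k2 : (2 < k)%N by lia.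
set p : 'I_k := Ordinal k0; set q : 'I_k := Ordinal k1; set s : 'I_k := Ordinal k2.
have pq : p != q by []. have ps : p != s by []. have qs : q != s by [].
have u1p := U1 c p hb g0 k3; have u1q := U1 c q hb g0 k3.
have u2p := U2 c hb g0 k3 pq.
have qp : q != p by [].
have u2q := U2 c hb g0 k3 qp; rewrite g1_comm in u2q.
have u3 := U3 c p hb g0 k3.
have u4 := U4 c hb g0 k3 pq ps qs.
have Hl := Hb (L p) (L q) ltac:(by rewrite eqLL) ltac:(by rewrite gE).
rewrite -/(g1 p q) in Hl.
have Hc := Ha (C p) (C q) ltac:(by rewrite gE); case: Hc => Hc _.
rewrite -/(g2 p q) in Hc.
have V : (b 1%N - c) - b 3%N + gam * ((k%:R - 1) * b 2%N + b 3%N) <= 0.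
  rewrite leNgt; apply/negP => Vpos.
  have H1 : utility b c gam (@gk k) (L p) < utility b c gam (g1 p q) (L p) by lra.
  have := Hl H1; lra.
have W : c - b 1%N + b 3%N - gam * (2%:R * b 2%N + b 3%N) + gam / (k + k)%:R * 2 * b 4%N <= 0.
  lra.
clear Hl Hc u1p u1q u2p u2q u3 u4 Ha Hb Hst.
have b2p : 0 < b 2%N by apply: hp.
have b4p : 0 < b 4%N by apply: hp.
have K3 : 0 <= k%:R - 3 :> R by rewrite subr_ge0 (ler_nat R 3 k).
have P : 0 <= gam * ((k%:R - 3) * b 2%N) by apply: mulr_ge0 => //; apply: mulr_ge0 => //; apply: ltW.
set Qv := gam / (k + k)%:R * 2 * b 4%N in W *.
have Q : Qv <= 0.
  have VW := lerD V W; rewrite addr0 in VW.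
  have E : (b 1%N - c) - b 3%N + gam * ((k%:R - 1) * b 2%N + b 3%N) +
           (c - b 1%N + b 3%N - gam * (2%:R * b 2%N + b 3%N) + Qv) = gam * ((k%:R - 3) * b 2%N) + Qv by ring.
  rewrite E in VW; move: VW P; set P0 := gam * _; move=> VW P; lra.
have g00 : gam = 0.
  apply/eqP; rewrite eq_le g0 andbT leNgt; apply/negP => gpos.
  have : 0 < Qv.
    rewrite /Qv; apply: mulr_gt0 => //; apply: mulr_gt0 => //; apply: mulr_gt0 => //.
    by rewrite invr_gt0 ltr0n addn_gt0 k0.
  by rewrite ltNge Q.
split => //.
move: V W; rewrite /Qv g00 !mul0r => V W.
move: V W; clear; move=> V W; lra.
Qed.
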